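(* Let $n,p\ge1$ and $\alpha\in\widehat F_{(n,p)}$, with fine-degree components $\alpha_{\underline{k}}$. If $\lambda_i(\alpha)=0$ for some $i\in\{1,\dots,n\}$, then $\alpha_{\underline{k}}=0$ unless the $i$-th column of $\mathrm{supp}(\underline{k})$ is nonempty. Similarly, if $\rho_j(\alpha)=0$ for some $j\in\{1,\dots,p\}$, then $\alpha_{\underline{k}}=0$ unless the $j$-th line of $\mathrm{supp}(\underline{k})$ is nonempty.
   Context: Work over a field of characteristic $0$. $F_{(m,q)}$ is the Lie algebra generated by $x_{i,j}$, $(i,j)\in\{1,\dots,m\}\times\{1,\dots,q\}$, with defining relations $[x_{i,j},x_{i',j'}]=0$ whenever $i\ne i'$ and $j\ne j'$. It is graded by the fine degree in $\bigoplus_{(i,j)}\mathbb{N}\epsilon_{(i,j)}$ with $\deg x_{i,j}=\epsilon_{(i,j)}$, and by total degree ($\deg x_{i,j}=1$); $\widehat F_{(m,q)}$ is the completion for the total degree. For $\underline{k}=\sum k_{(i,j)}\epsilon_{(i,j)}$, $\mathrm{supp}(\underline{k})=\{(i,j)\mid k_{(i,j)}\ne0\}$; the $i$-th column of a set $S$ is $S\cap(\{i\}\times\{1,\dots,p\})$, the $j$-th line is $S\cap(\{1,\dots,n\}\times\{j\})$. $\lambda_i:\widehat F_{(n,p)}\to\widehat F_{(n-1,p)}$ is the continuous Lie morphism with $x_{i',j'}\mapsto x_{i',j'}$ if $i'<i$, $0$ if $i'=i$, $x_{i'-1,j'}$ if $i'>i$; $\rho_j:\widehat F_{(n,p)}\to\widehat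 F_{(n,p-1)}$ is defined analogously in the second index. *)

(* Defs.v *)
From HB Require Import structures.
From mathcomp Require Import all_boot all_order all_algebra.
Set Implicit Arguments. Unset Strict Implicit. Unset Printing Implicit Defensive.
Import Order.TTheory GRing.Theory Num.Theory.
Local Open Scope ring_scope.

Record lieAlgebra (K : fieldType) := LieAlgebra {
  lie_carrier :> lmodType K;
  lie_br : lie_carrier -> lie_carrier -> lie_carrier;
  lie_brDl : forall (a : K) (u v w : lie_carrier),
      lie_br (a *: u + v) w = a *: lie_br u w + lie_br v w;
  lie_brDr : forall (a : K) (u v w : lie_carrier),
      lie_br w (a *: u + v) = a *: lie_br w u + lie_br w v;
  lie_br_alt : forall u : lie_carrier, lie_br u u = 0;
  lie_jacobi : forall u v w : lie_carrier,
      lie_br u (lie_br v w) + lie_br v (lie_br w u) + lie_br w (lie_br u v) = 0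
}.
Arguments lie_br {K} _ _ _.

Definition lie_morph (K : fieldType) (L M : lieAlgebra K) (f : L -> M) : Prop :=
  (forall (a : K) (u v : L), f (a *: u + v) = a *: f u + f v) /\
  (forall u v : L, f (lie_br L u v) = lie_br M (f u) (f v)).

Definition lie_presentation (K : fieldType) (I : Type) (rel : I -> I -> Prop)
    (L : lieAlgebra K) (x : I -> L) : Prop :=
  (forall a b, rel a b -> lie_br L (x a) (x b) = 0) /\
  (forall (M : lieAlgebra K) (y : I -> M),
     (forall a b, rel a b -> lie_br M (y a) (y b) = 0) ->
     (exists f : L -> M, lie_morph f /\ forall a, f (x a) = y a) /\
     (forall g h : L -> M, lie_morph g -> lie_morph h ->
        (forall a, g (x a) = h (x a)) -> forall u, g u = h u)).

(** Relations of F_(m,q): x_{i,j}, x_{i',j'} commute if i <> i' and j <> j'. *)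
Definition Frel (m q : nat) (u v : 'I_m * 'I_q) : Prop :=
  u.1 <> v.1 /\ u.2 <> v.2.

Definition is_F (K : fieldType) (m q : nat) (L : lieAlgebra K)
    (x : 'I_m * 'I_q -> L) : Prop :=
  lie_presentation (@Frel m q) x.

Definition fdeg (I : finType) := {ffun I -> nat}.

Definition fdeg_gen (I : finType) (a : I) : fdeg I := [ffun b => nat_of_bool (b == a)].
Definition fdeg_add (I : finType) (k1 k2 : fdeg I) : fdeg I :=
  [ffun b => (k1 b + k2 b)%N].
Definition fdeg_tot (I : finType) (k : fdeg I) : nat := (\sum_b k b)%N.

Inductive lie_monom (K : fieldType) (I : finType) (L : lieAlgebra K) (x : I -> L)
  : fdeg I -> L -> Prop :=
| lm_gen a : lie_monom x (fdeg_gen a) (x a)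
| lm_br k1 k2 u v : lie_monom x k1 u -> lie_monom x k2 v ->
    lie_monom x (fdeg_add k1 k2) (lie_br L u v).

Inductive in_span (K : fieldType) (V : lmodType K) (P : V -> Prop) : V -> Prop :=
| span0 : in_span P 0
| span_cons (a : K) u v : P u -> in_span P v -> in_span P (a *: u + v).

Definition fcomp (K : fieldType) (I : finType) (L : lieAlgebra K) (x : I -> L)
  (k : fdeg I) : L -> Prop := in_span (lie_monom x k).

(** Elements of total degree >= M (the filtration defining the completion). *)
Definition deg_ge (K : fieldType) (I : finType) (L : lieAlgebra K) (x : I -> L)
  (M : nat) : L -> Prop :=
  in_span (fun u => exists k : fdeg I, (M <= fdeg_tot k)%N /\ lie_monom x k u).

(** An element of the completion, given by its fine-degree components. *)
Definition completion_elt (K : fieldType) (I : finType) (L : lieAlgebra K)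
  (x : I -> L) (alpha : fdeg I -> L) : Prop :=
  forall k, fcomp x k (alpha k).

Definition trunc (K : fieldType) (I : finType) (L : lieAlgebra K)
  (alpha : fdeg I -> L) (N : nat) : L :=
  \sum_(k : {ffun I -> 'I_N} | (\sum_b (k b : nat) < N)%N)
     alpha [ffun b => (k b : nat)].

(** A sequence in L converges to 0 in the completion for the total degree. *)
Definition tends0 (K : fieldType) (I : finType) (L : lieAlgebra K) (x : I -> L)
  (s : nat -> L) : Prop :=
  forall M, exists N0, forall N, (N0 <= N)%N -> deg_ge x M (s N).

Definition lambda_gen (K : fieldType) (n p : nat) (L' : lieAlgebra K)
  (x' : 'I_n.-1 * 'I_p -> L') (i : 'I_n) (u : 'I_n * 'I_p) : L' :=
  match unlift i u.1 with Some a => x' (a, u.2) | None => 0 end.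

Definition rho_gen (K : fieldType) (n p : nat) (L' : lieAlgebra K)
  (x' : 'I_n * 'I_p.-1 -> L') (j : 'I_p) (u : 'I_n * 'I_p) : L' :=
  match unlift j u.2 with Some b => x' (u.1, b) | None => 0 end.

(* Main.v *)
Require Import Defs.
From HB Require Import structures.
From mathcomp Require Import all_boot all_order all_algebra.
Import Order.TTheory GRing.Theory Num.Theory.
Local Open Scope ring_scope.

Lemma poly_sep (K : fieldType) (charK0 : [pchar K] =i pred0) (V : lmodType K)
  (D : nat) (z : 'I_D -> V) :
  (forall t : K, \sum_(d < D) t ^+ d *: z d = 0) -> forall d, z d = 0.
Proof.
move=> H d0.
pose a : 'rV[K]_D := \row_j (j : nat)%:R.
pose Vm := Vandermonde D a.
have uV : Vm \in unitmx.
  rewrite unitmxE det_Vandermonde unitfE; apply/prodf_neq0 => i _.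
  apply/prodf_neq0 => j ij; rewrite !mxE -natrB ?(ltnW ij) //.
  by rewrite (pcharf0P K).1 // subn_eq0 -ltnNge.
pose W := invmx Vm.
have e : \sum_(j < D) W j d0 *: \sum_(d < D) (a 0 j) ^+ d *: z d = z d0.
  transitivity (\sum_(d < D) (Vm *m W) d d0 *: z d).
    rewrite (eq_bigr (fun j => \sum_(d < D) (W j d0 * a 0 j ^+ d) *: z d)); last first.
      by move=> j _; rewrite scaler_sumr; apply: eq_bigr => d _; rewrite scalerA.
    rewrite exchange_big /=; apply: eq_bigr => d _; rewrite !mxE scaler_suml.
    by apply: eq_bigr => j _; rewrite !mxE mulrC.
  rewrite mulmxV // (bigD1 d0) //= big1 ?addr0; first by rewrite mxE eqxx scale1r.
  by move=> d /negPf nd; rewrite mxE nd scale0r.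
by rewrite -e big1 // => j _; rewrite H scaler0.
Qed.

Lemma sum_regroup (K : fieldType) (V : lmodType K) (T : Type) (s : seq T)
  (f : T -> nat) (g : T -> V) (D : nat) (t : K) :
  all (fun e => f e < D)%N s ->
  \sum_(e <- s) t ^+ f e *: g e =
  \sum_(j < D) t ^+ j *: \sum_(e <- s | f e == j) g e.
Proof.
elim: s => [|e s IH] /=.
  by move=> _; rewrite big_nil big1 // => j _; rewrite big_nil scaler0.
move=> /andP[fe hs]; rewrite big_cons (IH hs).
rewrite [RHS](eq_bigr (fun j : 'I_D => t ^+ j *: (if f e == j then g e else 0) +
     t ^+ j *: \sum_(e0 <- s | f e0 == j) g e0)); last first.
  by move=> j _; rewrite big_cons; case: ifP => _; rewrite ?scalerDr ?scaler0 ?add0r.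
rewrite big_split /=; congr (_ + _).
rewrite (bigD1 (Ordinal fe)) //= eqxx big1 ?addr0 //.
move=> j nj; case: ifP; last by rewrite scaler0.
by move/eqP=> ej; case/eqP: nj; apply: val_inj; rewrite /= ej.
Qed.

Lemma seq_sep (K : fieldType) (charK0 : [pchar K] =i pred0) (V : lmodType K)
  (T : Type) (s : seq T) (f : T -> nat) (g : T -> V) :
  (forall t : K, \sum_(e <- s) t ^+ f e *: g e = 0) ->
  forall d, \sum_(e <- s | f e == d) g e = 0.
Proof.
move=> H d.
pose D := (maxn (foldr maxn 0 (map f s)) d).+1.
have hall0 : forall s' : seq T, all (fun e => f e <= foldr maxn 0 (map f s'))%N s'.
  elim=> //= e s' IH; rewrite leq_maxl /=.
  by apply: sub_all IH => e' /= h; rewrite leq_max h orbT.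
have hall : all (fun e => f e < D)%N s.
  apply: sub_all (hall0 s) => e /= h; rewrite ltnS leq_max h //.
have hd : (d < D)%N by rewrite ltnS leq_maxr.
have := @poly_sep K charK0 V D (fun j : 'I_D => \sum_(e <- s | f e == j) g e).
move=> /(_ _ (Ordinal hd)) /=; apply => t.
by rewrite -(@sum_regroup K V T s f g D t hall) H.
Qed.

Set Implicit Arguments. Unset Strict Implicit.


Lemma double0 (V : zmodType) (a : V) : a = a + a -> a = 0.
Proof. by move=> h; apply/eqP; rewrite -(inj_eq (addrI a)) addr0 -h. Qed.
Arguments double0 {V a}.

Lemma br0l (K : fieldType) (L : lieAlgebra K) (w : L) : lie_br L 0 w = 0.
Proof.
have := (@lie_brDl _ L) 1 0 0 w; rewrite !scale1r addr0 => /double0 //.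
Qed.

Lemma br0r (K : fieldType) (L : lieAlgebra K) (w : L) : lie_br L w 0 = 0.
Proof.
have := (@lie_brDr _ L) 1 0 0 w; rewrite !scale1r addr0 => /double0 //.
Qed.

Lemma brZl (K : fieldType) (L : lieAlgebra K) a (u w : L) : lie_br L (a *: u) w = a *: lie_br L u w.
Proof. by have := (@lie_brDl _ L) a u 0 w; rewrite addr0 br0l addr0. Qed.

Lemma brZr (K : fieldType) (L : lieAlgebra K) a (u w : L) : lie_br L w (a *: u) = a *: lie_br L w u.
Proof. by have := (@lie_brDr _ L) a u 0 w; rewrite addr0 br0r addr0. Qed.

Lemma morph0 (K : fieldType) (L M : lieAlgebra K) (f : L -> M) : lie_morph f -> f 0 = 0.
Proof.
case=> h _; have := h 1 0 0; rewrite !scale1r addr0 => /double0 //.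
Qed.

Lemma morphD (K : fieldType) (L M : lieAlgebra K) (f : L -> M) : lie_morph f ->
  forall u v, f (u + v) = f u + f v.
Proof. by case=> h _ u v; have := h 1 u v; rewrite !scale1r. Qed.

Lemma morphZ (K : fieldType) (L M : lieAlgebra K) (f : L -> M) : lie_morph f ->
  forall a u, f (a *: u) = a *: f u.
Proof. move=> hf a u; have := hf.1 a u 0; rewrite !addr0 (morph0 hf) addr0 //. Qed.

Lemma morphN (K : fieldType) (L M : lieAlgebra K) (f : L -> M) : lie_morph f ->
  forall u, f (- u) = - f u.
Proof. by move=> hf u; rewrite -scaleN1r (morphZ hf) scaleN1r. Qed.

Lemma morph_sum (K : fieldType) (L M : lieAlgebra K) (f : L -> M) : lie_morph f ->
  forall (T : Type) (s : seq T) (P : pred T) (F : T -> L),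
  f (\sum_(e <- s | P e) F e) = \sum_(e <- s | P e) f (F e).
Proof. by move=> hf T s P F; apply: (big_morph f (morphD hf) (morph0 hf)). Qed.

Lemma span_add (K : fieldType) (V : lmodType K) (P : V -> Prop) u v :
  in_span P u -> in_span P v -> in_span P (u + v).
Proof.
elim=> [|a u1 v1 Pu1 _ IH] hv; first by rewrite add0r.
by rewrite -addrA; exact: (Defs.span_cons a Pu1 (IH hv)).
Qed.

Lemma span_scale (K : fieldType) (V : lmodType K) (P : V -> Prop) c u :
  in_span P u -> in_span P (c *: u).
Proof.
elim=> [|a u1 v1 Pu1 _ IH]; first by rewrite scaler0; apply: Defs.span0.
by rewrite scalerDr scalerA; apply: Defs.span_cons.
Qed.

Lemma span_in (K : fieldType) (V : lmodType K) (P : V -> Prop) u : P u -> in_span P u.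
Proof. by move=> h; rewrite -[u]addr0 -[u]scale1r; apply: Defs.span_cons => //; apply: Defs.span0. Qed.

Lemma torus (K : fieldType) (I : finType) (rel : I -> I -> Prop) (L : lieAlgebra K) (x : I -> L)
  (hL : lie_presentation rel x) (u0 : I) (t : K) :
  exists th : L -> L, lie_morph th /\
    forall k v, fcomp x k v -> th v = t ^+ (k u0) *: v.
Proof.
case: hL => h1 h2.
pose y := fun a => (if a == u0 then t else 1) *: x a.
have hy : forall a b, rel a b -> lie_br L (y a) (y b) = 0.
  by move=> a b r; rewrite /y brZl brZr h1 // !scaler0.
have [[f [fm fx]] _] := h2 L y hy.
exists f; split => // k v.
have hm : forall k v, lie_monom x k v -> f v = t ^+ (k u0) *: v.
  move=> k1 v1; elim => [a|k2 k3 u w _ IHu _ IHw].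
    rewrite fx /y ffunE; have [->|ne] := eqVneq a u0; first by [].
    by [].  
  by rewrite fm.2 IHu IHw brZl brZr scalerA ffunE exprD mulrC.
elim => [|a u w mu _ IH]; first by rewrite (morph0 fm) scaler0.
by rewrite fm.1 IH (hm _ _ mu) scalerDr !scalerA mulrC.
Qed.

Lemma graded (K : fieldType) (charK0 : [pchar K] =i pred0) (I : finType) (rel : I -> I -> Prop)
  (L : lieAlgebra K) (x : I -> L) (hL : lie_presentation rel x)
  (s : seq (fdeg I * L)) :
  (forall e, e \in s -> fcomp x e.1 e.2) -> \sum_(e <- s) e.2 = 0 ->
  forall k, \sum_(e <- s | e.1 == k) e.2 = 0.
Proof.
move=> hs h0.
suff H : forall U : seq I, forall k : fdeg I,
    \sum_(e <- s | all (fun u => e.1 u == k u) U) e.2 = 0.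
  move=> k; apply: etrans (H (enum I) k); apply: eq_bigl => e.
  apply/eqP/allP => [-> //|h]; apply/ffunP => u; apply/eqP/h.
  by rewrite mem_enum.
elim=> [|u U IH] k; first by apply: etrans h0; apply: eq_bigl.
have E : forall t : K, \sum_(e <- filter (fun e : fdeg I * L => all (fun u => e.1 u == k u) U) s)
    t ^+ (e.1 u) *: e.2 = 0.
  move=> t; have [th [thm thE]] := torus hL u t.
  rewrite big_filter.
  transitivity (th (\sum_(e <- s | all (fun u0 => e.1 u0 == k u0) U) e.2));
    last by rewrite IH (morph0 thm).
  rewrite (morph_sum thm) big_seq_cond [RHS]big_seq_cond.
  apply: eq_bigr => e /andP[es _].
  by rewrite (thE _ _ (hs e es)).
have := @seq_sep K charK0 L _ _ _ _ E (k u); rewrite big_filter_cond => E2; rewrite -[RHS]E2.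
by apply: eq_bigl => e /=; rewrite andbC.
Qed.


Definition shrink (I I' : finType) (iota : I' -> I) (k : fdeg I) : fdeg I' :=
  [ffun a => k (iota a)].

Definition avoid (I I' : finType) (sig : I -> option I') (k : fdeg I) : Prop :=
  forall u, sig u = None -> k u = 0%N.

Lemma lam_monom_zero (K : fieldType) (I I' : finType) (L L' : lieAlgebra K)
  (x : I -> L) (x' : I' -> L') (sig : I -> option I') (lam : L -> L')
  (hlam : lie_morph lam) (hlamx : forall u, lam (x u) = odflt 0 (omap x' (sig u)))
  k v : lie_monom x k v -> (exists u, sig u = None /\ (0 < k u)%N) -> lam v = 0.
Proof.
elim=> [a|k1 k2 u1 v1 _ IHu _ IHv] [w [hw kw]].
  move: kw; rewrite ffunE; case: eqP => // ew _.
  by rewrite hlamx -ew hw.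
rewrite hlam.2; move: kw; rewrite ffunE addn_gt0 => /orP[h|h].
  by rewrite IHu ?br0l //; exists w.
by rewrite IHv ?br0r //; exists w.
Qed.

Lemma lam_monom_avoid (K : fieldType) (I I' : finType) (L L' : lieAlgebra K)
  (x : I -> L) (x' : I' -> L') (sig : I -> option I') (iota : I' -> I)
  (hsi : forall a, sig (iota a) = Some a) (his : forall u a, sig u = Some a -> u = iota a)
  (lam : L -> L')
  (hlam : lie_morph lam) (hlamx : forall u, lam (x u) = odflt 0 (omap x' (sig u)))
  k v : lie_monom x k v -> avoid sig k -> lie_monom x' (shrink iota k) (lam v).
Proof.
have iinj : injective iota.
  by move=> a b e; have := hsi a; rewrite e hsi => -[].
elim=> [a|k1 k2 u1 v1 _ IHu _ IHv] hav.
  case e: (sig a) => [a'|]; last first.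
    by have := hav a e; rewrite ffunE eqxx.
  have -> : shrink iota (fdeg_gen a) = fdeg_gen a'.
    apply/ffunP => b; rewrite !ffunE (his _ _ e) inj_eq //.
  by rewrite hlamx e /=; apply: lm_gen.
have -> : shrink iota (fdeg_add k1 k2) = fdeg_add (shrink iota k1) (shrink iota k2).
  by apply/ffunP => b; rewrite !ffunE.
rewrite hlam.2; apply: lm_br; [apply: IHu|apply: IHv] => w hw;
  by have := hav w hw; rewrite ffunE => /eqP; rewrite addn_eq0 => /andP[/eqP ? /eqP ?].
Qed.

Lemma avoid_dec (I I' : finType) (sig : I -> option I') (k : fdeg I) :
  avoid sig k \/ exists u, sig u = None /\ (0 < k u)%N.
Proof.
case: (boolP [forall u, (sig u == None) ==> (k u == 0%N)]) => [/forallP h|].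
  by left => u e; have := h u; rewrite e eqxx /= => /eqP.
rewrite negb_forall => /existsP[u]; rewrite negb_imply => /andP[/eqP e nz].
by right; exists u; rewrite lt0n.
Qed.

Lemma fcomp_lam (K : fieldType) (I I' : finType) (L L' : lieAlgebra K)
  (x : I -> L) (x' : I' -> L') (sig : I -> option I') (iota : I' -> I)
  (hsi : forall a, sig (iota a) = Some a) (his : forall u a, sig u = Some a -> u = iota a)
  (lam : L -> L')
  (hlam : lie_morph lam) (hlamx : forall u, lam (x u) = odflt 0 (omap x' (sig u)))
  k v : fcomp x k v -> fcomp x' (shrink iota k) (lam v).
Proof.
case: (avoid_dec sig k) => hk.
  elim=> [|a u w mu _ IH]; first by rewrite (morph0 hlam); apply: Defs.span0.
  rewrite hlam.1; apply: Defs.span_cons IH.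
  exact: (lam_monom_avoid hsi his hlam hlamx mu hk).
elim=> [|a u w mu _ IH]; first by rewrite (morph0 hlam); apply: Defs.span0.
by rewrite hlam.1 (lam_monom_zero hlam hlamx mu hk) scaler0 add0r.
Qed.

Lemma fcomp_lam0 (K : fieldType) (I I' : finType) (L L' : lieAlgebra K)
  (x : I -> L) (x' : I' -> L') (sig : I -> option I') (lam : L -> L')
  (hlam : lie_morph lam) (hlamx : forall u, lam (x u) = odflt 0 (omap x' (sig u)))
  k v : fcomp x k v -> (exists u, sig u = None /\ (0 < k u)%N) -> lam v = 0.
Proof.
move=> + hk; elim=> [|a u w mu _ IH]; first by rewrite (morph0 hlam).
by rewrite hlam.1 (lam_monom_zero hlam hlamx mu hk) scaler0 add0r.
Qed.

Lemma section_lam (K : fieldType) (I I' : finType) (rel : I -> I -> Prop)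
  (rel' : I' -> I' -> Prop) (L L' : lieAlgebra K)
  (x : I -> L) (x' : I' -> L') (hL : lie_presentation rel x)
  (hL' : lie_presentation rel' x') (sig : I -> option I') (iota : I' -> I)
  (hsi : forall a, sig (iota a) = Some a) (his : forall u a, sig u = Some a -> u = iota a)
  (hrel : forall a b, rel' a b -> rel (iota a) (iota b))
  (lam : L -> L')
  (hlam : lie_morph lam) (hlamx : forall u, lam (x u) = odflt 0 (omap x' (sig u)))
  k v : fcomp x k v -> avoid sig k -> lam v = 0 -> v = 0.
Proof.
have hy : forall a b, rel' a b -> lie_br L (x (iota a)) (x (iota b)) = 0.
  by move=> a b r; apply: hL.1; apply: hrel.
have [[s [sm sx]] _] := hL'.2 L (fun a => x (iota a)) hy.
have hm : forall k v, lie_monom x k v -> avoid sig k -> s (lam v) = v.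
  move=> k1 v1; elim=> [a|k2 k3 u w _ IHu _ IHw] hav.
    case e: (sig a) => [a'|]; last by have := hav a e; rewrite ffunE eqxx.
    by rewrite hlamx e /= sx (his _ _ e).
  rewrite hlam.2 sm.2 IHu ?IHw // => b hb; have := hav b hb;
    by rewrite ffunE => /eqP; rewrite addn_eq0 => /andP[/eqP ? /eqP ?].
move=> hv hk h0.
suff <- : s (lam v) = v by rewrite h0 (morph0 sm).
elim: hv {h0} => [|a u w mu _ IH]; first by rewrite (morph0 hlam) (morph0 sm).
by rewrite hlam.1 sm.1 IH (hm _ _ mu hk).
Qed.

Lemma deg_ge_seq (K : fieldType) (I : finType) (L : lieAlgebra K) (x : I -> L) M v :
  deg_ge x M v -> exists s : seq (fdeg I * L),
    (forall e, e \in s -> (M <= fdeg_tot e.1)%N /\ fcomp x e.1 e.2) /\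
    v = \sum_(e <- s) e.2.
Proof.
elim=> [|a u w [k [hk mu]] _ [s [hs ->]]]; first by exists [::]; rewrite big_nil.
exists ((k, a *: u) :: s); rewrite big_cons; split => // e.
rewrite in_cons => /orP[/eqP -> /=|]; last exact: hs.
split => //; rewrite -[a *: u]addr0; apply: Defs.span_cons mu _; apply: Defs.span0.
Qed.

Lemma main_gen (K : fieldType) (charK0 : [pchar K] =i pred0)
  (I I' : finType) (rel : I -> I -> Prop)
  (rel' : I' -> I' -> Prop) (L L' : lieAlgebra K)
  (x : I -> L) (x' : I' -> L') (hL : lie_presentation rel x)
  (hL' : lie_presentation rel' x') (sig : I -> option I') (iota : I' -> I)
  (hsi : forall a, sig (iota a) = Some a) (his : forall u a, sig u = Some a -> u = iota a)
  (hrel : forall a b, rel' a b -> rel (iota a) (iota b))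
  (lam : L -> L')
  (hlam : lie_morph lam) (hlamx : forall u, lam (x u) = odflt 0 (omap x' (sig u)))
  (alpha : fdeg I -> L) (halpha : completion_elt x alpha)
  (ht : tends0 x' (fun N => lam (trunc alpha N)))
  (k0 : fdeg I) (hk0 : avoid sig k0) : alpha k0 = 0.
Proof.
apply: (section_lam hL hL' hsi his hrel hlam hlamx (halpha k0) hk0).
set k0' := shrink iota k0.
have [N0 hN0] := ht (fdeg_tot k0').+1.
set N := maxn N0 (fdeg_tot k0).+1.
have [s2 [hs2 er]] := deg_ge_seq (hN0 N (leq_maxl _ _)).
pose conv (kk : {ffun I -> 'I_N}) : fdeg I := [ffun b => (kk b : nat)].
pose P := fun kk : {ffun I -> 'I_N} => (\sum_b (kk b : nat) < N)%N.
pose s1 := [seq (shrink iota (conv kk), lam (alpha (conv kk))) |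
             kk <- filter P (index_enum {ffun I -> 'I_N})].
pose S := s1 ++ [seq (e.1, - e.2) | e <- s2].
have hS : forall e, e \in S -> fcomp x' e.1 e.2.
  move=> e; rewrite mem_cat => /orP[/mapP[kk _ ->]|/mapP[e' /hs2 [_ h] ->]] /=.
    exact: (fcomp_lam hsi his hlam hlamx (halpha _)).
  by rewrite -scaleN1r; apply: span_scale.
have sum0 : \sum_(e <- S) e.2 = 0.
  rewrite big_cat /= !big_map big_filter /=.
  by rewrite sumrN -er /trunc (morph_sum hlam) subrr.
have := graded charK0 hL' hS sum0 k0'.
rewrite big_cat /= !big_map [X in _ + X]big1_seq ?addr0; last first.
  move=> e /andP[/= /eqP ek /hs2 [hM _]].
  by move: hM; rewrite ek ltnn.
rewrite big_filter_cond /=.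
have hk : forall b, (k0 b < N)%N.
  move=> b; rewrite /N leq_max ltnS; apply/orP; right.
  by rewrite /fdeg_tot (bigD1 b) //= leq_addr.
pose kk0 : {ffun I -> 'I_N} := [ffun b => Ordinal (hk b)].
have ck0 : conv kk0 = k0 by apply/ffunP => b; rewrite !ffunE.
rewrite (bigD1 kk0) /=; last first.
  rewrite ck0 eqxx andbT /P.
  under eq_bigr => b _ do rewrite ffunE /=.
  by rewrite /N leq_max ltnS leqnn orbT.
rewrite ck0 big1 ?addr0 // => kk /andP[/andP[_ hsh] nkk].
case: (avoid_dec sig (conv kk)) => [hav|hnav]; last first.
  exact: (fcomp_lam0 hlam hlamx (halpha _) hnav).
have ceq : conv kk = k0.
  apply/ffunP => u; case e: (sig u) => [a|]; last by rewrite hav ?hk0.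
  have := congr1 (fun f : fdeg I' => f a) (eqP hsh); rewrite /k0' /shrink !ffunE.
  by rewrite (his _ _ e).
case/eqP: nkk; apply/ffunP => b; apply/val_inj; rewrite /= ffunE /=.
by have := congr1 (fun f : fdeg I => f b) ceq; rewrite /conv ffunE.
Qed.

Unset Implicit Arguments. Set Strict Implicit.

Theorem lemma1p6 (K : fieldType) (charK0 : [pchar K] =i pred0)
  (n p : nat) (hn : (0 < n)%N) (hp : (0 < p)%N)
  (L : lieAlgebra K) (x : 'I_n * 'I_p -> L) (hL : is_F x)
  (alpha : fdeg ('I_n * 'I_p)%type -> L) (halpha : completion_elt x alpha) :
  (forall (L' : lieAlgebra K) (x' : 'I_n.-1 * 'I_p -> L') (hL' : is_F x')
     (i : 'I_n) (lam : L -> L'),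
     lie_morph lam -> (forall u, lam (x u) = lambda_gen x' i u) ->
     tends0 x' (fun N => lam (trunc alpha N)) ->
     forall k : fdeg ('I_n * 'I_p)%type,
       (forall b : 'I_p, k (i, b) = 0%N) -> alpha k = 0) /\
  (forall (L' : lieAlgebra K) (x' : 'I_n * 'I_p.-1 -> L') (hL' : is_F x')
     (j : 'I_p) (rho : L -> L'),
     lie_morph rho -> (forall u, rho (x u) = rho_gen x' j u) ->
     tends0 x' (fun N => rho (trunc alpha N)) ->
     forall k : fdeg ('I_n * 'I_p)%type,
       (forall a : 'I_n, k (a, j) = 0%N) -> alpha k = 0).
Proof.
split.
  move=> L' x' hL' i lam hlam hlamx ht k hk.
  pose sig := fun u : 'I_n * 'I_p => omap (fun a => (a, u.2)) (unlift i u.1).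
  pose iota := fun ab : 'I_n.-1 * 'I_p => (lift i ab.1, ab.2).
  apply: (@main_gen K charK0 _ _ (@Frel n p) (@Frel n.-1 p) L L' x x' hL hL' sig iota
            _ _ _ lam hlam _ alpha halpha ht k).
  - by case=> a b; rewrite /sig /iota /= liftK.
  - case=> u1 u2 [a b]; rewrite /sig /iota /=.
    by case: unliftP => [j ->|_] //= [<- <-].
  - case=> [a1 b1] [a2 b2] [/= h1 h2]; split => //= e; apply: h1.
    exact: lift_inj e.
  - move=> u; rewrite hlamx /lambda_gen /sig.
    by case: (unlift i u.1).
  - case=> u1 u2; rewrite /sig /=.
    by case: unliftP => [j ->|->] //= _; apply: hk.
move=> L' x' hL' j rho hlam hlamx ht k hk.
pose sig := fun u : 'I_n * 'I_p => omap (fun b => (u.1, b)) (unlift j u.2).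
pose iota := fun ab : 'I_n * 'I_p.-1 => (ab.1, lift j ab.2).
apply: (@main_gen K charK0 _ _ (@Frel n p) (@Frel n p.-1) L L' x x' hL hL' sig iota
          _ _ _ rho hlam _ alpha halpha ht k).
- by case=> a b; rewrite /sig /iota /= liftK.
- case=> u1 u2 [a b]; rewrite /sig /iota /=.
  by case: unliftP => [j' ->|_] //= [<- <-].
- case=> [a1 b1] [a2 b2] [/= h1 h2]; split => //= e; apply: h2.
  exact: lift_inj e.
- move=> u; rewrite hlamx /rho_gen /sig.
  by case: (unlift j u.2).
- case=> u1 u2; rewrite /sig /=.
  by case: unliftP => [j' ->|->] //= _; apply: hk.
Qed.
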